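(* Let $n\in\mathbb{N}$ and let $a=(\alpha_1,\dots,\alpha_n)$, $b=(\beta_1,\dots,\beta_n)\in\mathbb{R}^n$ satisfy $\sum_{k=1}^n\alpha_k=\sum_{k=1}^n\beta_k$. Let $\mathcal{V}_a=\mathrm{conv}\{(\alpha_{\pi(1)},\dots,\alpha_{\pi(n)}):\pi\in S_n\}$ and $\mathcal{V}_b=\mathrm{conv}\{(\beta_{\pi(1)},\dots,\beta_{\pi(n)}):\pi\in S_n\}$. Then $\mathcal{V}_a$ and $\mathcal{V}_b$ cannot be properly separated by a hyperplane $H_{u,\alpha}=\{z\in\mathbb{R}^n:\langle z,u\rangle=\alpha\}$ with $u\in\mathbb{R}^n\setminus\{0\}$ and $\alpha\in\mathbb{R}$.
   Context: $S_n$ is the symmetric group on $\{1,\dots,n\}$ and $\langle\cdot,\cdot\rangle$ the standard inner product. Two convex sets $A,B$ are properly separated by a hyperplane $H$ if $A$ and $B$ lie in opposite closed half-spaces bounded by $H$ and are not both contained in $H$. *)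

(* Defs.v *)
From HB Require Import structures.
From mathcomp Require Import all_boot all_order all_algebra all_fingroup.
From mathcomp Require Import reals.
Set Implicit Arguments. Unset Strict Implicit. Unset Printing Implicit Defensive.
Import Order.TTheory GRing.Theory Num.Theory.
Local Open Scope ring_scope.

Definition permv (R : realType) (n : nat) (a : 'rV[R]_n) (s : 'S_n) : 'rV[R]_n :=
  \row_i a 0 (s i).

Definition conv_hull (R : realType) (n : nat) (I : finType) (v : I -> 'rV[R]_n)
  : 'rV[R]_n -> Prop :=
  fun z => exists w : I -> R,
    (forall i, 0 <= w i) /\ \sum_i w i = 1 /\ z = \sum_i w i *: v i.

Definition permutohedron (R : realType) (n : nat) (a : 'rV[R]_n) : 'rV[R]_n -> Prop :=
  conv_hull (fun s : 'S_n => permv a s).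

Definition dotv (R : realType) (n : nat) (z u : 'rV[R]_n) : R :=
  \sum_i z 0 i * u 0 i.

Definition properly_separated (R : realType) (n : nat)
  (A B : 'rV[R]_n -> Prop) (u : 'rV[R]_n) (al : R) : Prop :=
  (((forall z, A z -> dotv z u <= al) /\ (forall z, B z -> al <= dotv z u)) \/
   ((forall z, A z -> al <= dotv z u) /\ (forall z, B z -> dotv z u <= al))) /\
  ~ ((forall z, A z -> dotv z u = al) /\ (forall z, B z -> dotv z u = al)).

(* Main.v *)
Require Import Defs.
From HB Require Import structures.
From mathcomp Require Import all_boot all_order all_algebra all_fingroup.
From mathcomp Require Import reals.
Import Order.TTheory GRing.Theory Num.Theory.
Local Open Scope ring_scope.

Lemma fconst (R : realType) (n : nat) (a : 'rV[R]_n) (i j : 'I_n) :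
  \sum_(s : 'S_n) a 0 (s i) = \sum_(s : 'S_n) a 0 (s j).
Proof.
rewrite (reindex_inj (mulgI (tperm i j))) /=.
by apply: eq_bigr => s _; rewrite permM tpermL.
Qed.

Lemma ftot (R : realType) (n : nat) (a : 'rV[R]_n) (i : 'I_n) :
  n%:R * \sum_(s : 'S_n) a 0 (s i) = #|'S_n|%:R * \sum_k a 0 k.
Proof.
have -> : n%:R * \sum_(s : 'S_n) a 0 (s i) = \sum_(j < n) \sum_(s : 'S_n) a 0 (s j).
  rewrite -[X in X%:R * _](card_ord n).
  rewrite -[X in X%:R * _]sum1_card natr_sum mulr_suml.
  by apply: eq_bigr => j _; rewrite mul1r (fconst _ _ a i j).
rewrite exchange_big /= mulr_natl -sumr_const; apply: eq_bigr => s _.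
by rewrite [RHS](reindex_inj (@perm_inj _ s)).
Qed.

Lemma fab (R : realType) (n : nat) (a b : 'rV[R]_n)
  (hsum : \sum_(k < n) a 0 k = \sum_(k < n) b 0 k) (i : 'I_n) :
  \sum_(s : 'S_n) a 0 (s i) = \sum_(s : 'S_n) b 0 (s i).
Proof.
have n0 : (n%:R : R) != 0 by rewrite pnatr_eq0 -lt0n; case: n i {a b hsum} => [[]|].
apply: (mulfI n0); by rewrite !ftot hsum.
Qed.

Lemma sumdot (R : realType) (n : nat) (a : 'rV[R]_n) (u : 'rV[R]_n) :
  \sum_(s : 'S_n) dotv (permv a s) u = \sum_i u 0 i * \sum_(s : 'S_n) a 0 (s i).
Proof.
rewrite /dotv exchange_big /=; apply: eq_bigr => i _.
rewrite mulr_sumr; apply: eq_bigr => s _; by rewrite mxE mulrC.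
Qed.

Lemma hulldot (R : realType) (n : nat) (I : finType) (v : I -> 'rV[R]_n) u al z :
  conv_hull v z -> (forall s, dotv (v s) u = al) -> dotv z u = al.
Proof.
move=> [w [_ [w1 ->]]] h.
have -> : dotv (\sum_i w i *: v i) u = \sum_i w i * dotv (v i) u.
  rewrite /dotv; under eq_bigr do rewrite summxE mulr_suml.
  rewrite exchange_big /=; apply: eq_bigr => s _; rewrite mulr_sumr.
  by apply: eq_bigr => k _; rewrite mxE mulrA.
by under eq_bigr do rewrite h; rewrite -mulr_suml w1 mul1r.
Qed.

Lemma squeeze (R : realType) (I : finType) (x y : I -> R) al :
  (forall s, x s <= al) -> (forall s, al <= y s) -> \sum_s x s = \sum_s y s ->
  (forall s, x s = al) /\ (forall s, y s = al).
Proof.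
move=> hx hy hs.
have e : \sum_s (al - x s) + \sum_s (y s - al) = 0.
  by rewrite !sumrB hs addrC addrA subrK subrr.
have p1 : 0 <= \sum_s (al - x s) by apply: sumr_ge0 => s _; rewrite subr_ge0.
have p2 : 0 <= \sum_s (y s - al) by apply: sumr_ge0 => s _; rewrite subr_ge0.
move/eqP: e; rewrite paddr_eq0 // => /andP[/eqP e1 /eqP e2].
split=> s.
- have /psumr_eq0P h := e1; apply/eqP; rewrite eq_sym -subr_eq0; apply/eqP/h => // t _.
  by rewrite subr_ge0.
- have /psumr_eq0P h := e2; apply/eqP; rewrite -subr_eq0; apply/eqP/h => // t _.
  by rewrite subr_ge0.
Qed.

Theorem lemma2 (R : realType) (n : nat) (a b : 'rV[R]_n)
  (hsum : \sum_(k < n) a 0 k = \sum_(k < n) b 0 k) :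
  ~ (exists (u : 'rV[R]_n) (al : R),
       u != 0 /\ properly_separated (permutohedron a) (permutohedron b) u al).
Proof.
move=> [u [al [_ [hsep hnot]]]]; apply: hnot.
have hs : \sum_(s : 'S_n) dotv (permv a s) u = \sum_(s : 'S_n) dotv (permv b s) u.
  by rewrite !sumdot; apply: eq_bigr => i _; rewrite (fab _ _ _ _ hsum).
have mem : forall (c : 'rV[R]_n) (s : 'S_n), permutohedron c (permv c s).
  move=> c s; exists (fun t => if t == s then 1 else 0); split.
    by move=> t; case: ifP.
  split; first by rewrite (bigD1 s) //= eqxx big1 ?addr0 // => t /negbTE ->.
  rewrite (bigD1 s) //= eqxx scale1r big1 ?addr0 // => t /negbTE ->.
  by rewrite scale0r.
case: hsep => [[hA hB]|[hA hB]].
- have [ea eb] := squeeze _ _ _ _ _ (fun s => hA _ (mem a s)) (fun s => hB _ (mem b s)) hs.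
  by split=> z hz; apply: (hulldot _ _ _ _ _ _ _ hz).
- have [eb ea] := squeeze _ _ _ _ _ (fun s => hB _ (mem b s)) (fun s => hA _ (mem a s)) (esym hs).
  by split=> z hz; apply: (hulldot _ _ _ _ _ _ _ hz).
Qed.
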